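(* Let $\mathcal{H}$ be a real Hilbert space with orthonormal basis $(\varphi_\gamma)_{\gamma\in\Gamma}$, $\Gamma=\Gamma_1\cup\dots\cup\Gamma_n$ pairwise disjoint, $p_i\in[1,2]$, $p_\gamma=p_i$ for $\gamma\in\Gamma_i$, and weights $w_\gamma\ge c>0$. For $f\in\mathcal{H}$ let $|||f|||^P_{W,P}=\sum_\gamma w_\gamma|\langle f,\varphi_\gamma\rangle|^{p_\gamma}$. If a sequence $(v_k)$ in $\mathcal{H}$ converges weakly to $v$ and $\lim_{k\to\infty}|||v_k|||^P_{W,P}=|||v|||^P_{W,P}$, then $\lim_{k\to\infty}\|v-v_k\|=0$. *)

(* Defs.v *)
From HB Require Import structures.
From mathcomp Require Import all_boot all_order all_algebra.
From mathcomp Require Import all_classical all_reals all_analysis.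
Set Implicit Arguments. Unset Strict Implicit. Unset Printing Implicit Defensive.
Import Order.TTheory GRing.Theory Num.Theory.
Import numFieldNormedType.Exports.
Local Open Scope classical_set_scope.
Local Open Scope ring_scope.

(* ip is a real inner product on the (complete) normed space V inducing its
   norm: V is then a real Hilbert space. *)
Definition is_inner_product (R : realType) (V : completeNormedModType R)
    (ip : V -> V -> R) : Prop :=
  [/\ forall x y, ip x y = ip y x,
      forall a x y z, ip (a *: x + y) z = a * ip x z + ip y z
    & forall x, ip x x = `|x| ^+ 2].

Definition is_orthonormal_basis (R : realType) (V : completeNormedModType R)
    (ip : V -> V -> R) (G : Type) (phi : G -> V) : Prop :=
  [/\ forall g, ip (phi g) (phi g) = 1,
      forall g h, g <> h -> ip (phi g) (phi h) = 0
    & forall f, (forall g, ip f (phi g) = 0) -> f = 0].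

Definition weak_cvg (R : realType) (V : completeNormedModType R)
    (ip : V -> V -> R) (u : nat -> V) (l : V) : Prop :=
  forall y, (fun k => ip (u k) y) @ \oo --> ip l y.

Definition wnorm (R : realType) (V : completeNormedModType R)
    (ip : V -> V -> R) (G : choiceType) (phi : G -> V)
    (w p : G -> R) (f : V) : \bar R :=
  \esum_(g in [set: G]) ((w g * powR `|ip f (phi g)| (p g))%:E).

(* Main.v *)
Require Import Defs.
From HB Require Import structures.
From mathcomp Require Import all_boot all_order all_algebra.
From mathcomp Require Import all_classical all_reals all_analysis.
From mathcomp Require Import ring lra.
Set Implicit Arguments. Unset Strict Implicit.
Import Order.TTheory GRing.Theory Num.Theory.
Import numFieldNormedType.Exports.
Local Open Scope classical_set_scope.
Local Open Scope ring_scope.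
Lemma ipDl (R : realType) (V : completeNormedModType R) (ip : V -> V -> R) :
  is_inner_product ip -> forall x y z, ip (x + y) z = ip x z + ip y z.
Proof. by case=> _ L _ x y z; rewrite -[x in LHS]scale1r L mul1r. Qed.

Lemma ip0l (R : realType) (V : completeNormedModType R) (ip : V -> V -> R) :
  is_inner_product ip -> forall z, ip 0 z = 0.
Proof.
move=> H z; have := ipDl H 0 0 z; rewrite addr0 => E.
have : ip 0 z + ip 0 z = ip 0 z + 0 by rewrite addr0 -E.
by move/addrI.
Qed.

Lemma ipZl (R : realType) (V : completeNormedModType R) (ip : V -> V -> R) :
  is_inner_product ip -> forall a x z, ip (a *: x) z = a * ip x z.
Proof. by move=> H a x z; case: (H) => _ L _; rewrite -[_ *: _]addr0 L ip0l // addr0. Qed.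

Lemma ipNl (R : realType) (V : completeNormedModType R) (ip : V -> V -> R) :
  is_inner_product ip -> forall x z, ip (- x) z = - ip x z.
Proof. by move=> H x z; rewrite -scaleN1r ipZl // mulN1r. Qed.

Lemma ipBl (R : realType) (V : completeNormedModType R) (ip : V -> V -> R) :
  is_inner_product ip -> forall x y z, ip (x - y) z = ip x z - ip y z.
Proof. by move=> H x y z; rewrite ipDl // ipNl. Qed.

Lemma ipBr (R : realType) (V : completeNormedModType R) (ip : V -> V -> R) :
  is_inner_product ip -> forall x y z, ip z (x - y) = ip z x - ip z y.
Proof. by move=> H x y z; case: (H) => S _ _; rewrite S ipBl // (S x) (S y). Qed.

Lemma ip_suml (R : realType) (V : completeNormedModType R) (ip : V -> V -> R)
  (I : Type) (s : seq I) (F : I -> V) z :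
  is_inner_product ip -> ip (\sum_(i <- s) F i) z = \sum_(i <- s) ip (F i) z.
Proof.
move=> H; elim: s => [|i s IH]; first by rewrite !big_nil ip0l.
by rewrite !big_cons ipDl // IH.
Qed.

Lemma ip_phi (R : realType) (V : completeNormedModType R) (ip : V -> V -> R)
  (G : choiceType) (phi : G -> V) :
  is_orthonormal_basis ip phi -> forall g h, ip (phi g) (phi h) = (g == h)%:R.
Proof.
case=> N O _ g h; case: eqVneq => [->|gh]; first by rewrite N.
by rewrite O //; apply/eqP.
Qed.

Definition comb (R : realType) (V : completeNormedModType R)
  (G : choiceType) (phi : G -> V) (s : seq G) (a : G -> R) : V :=
  \sum_(g <- s) a g *: phi g.

Lemma comb_coef (R : realType) (V : completeNormedModType R) (ip : V -> V -> R)
  (G : choiceType) (phi : G -> V) (s : seq G) (a : G -> R) h :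
  is_inner_product ip -> is_orthonormal_basis ip phi -> uniq s ->
  ip (comb phi s a) (phi h) = if h \in s then a h else 0.
Proof.
move=> H O us; rewrite /comb ip_suml //.
under eq_bigr => g _ do rewrite ipZl // (ip_phi O) mulr_natr mulrb.
case: ifP => hs.
  rewrite (bigD1_seq h) //= eqxx big1 ?addr0 // => g /negbTE ->; done.
rewrite big1_seq // => g /andP[_ gs]; case: eqP => // gh.
by rewrite -gh gs in hs.
Qed.

Lemma comb_ipl (R : realType) (V : completeNormedModType R) (ip : V -> V -> R)
  (G : choiceType) (phi : G -> V) (s : seq G) (a : G -> R) z :
  is_inner_product ip ->
  ip (comb phi s a) z = \sum_(g <- s) a g * ip z (phi g).
Proof.
move=> H; rewrite /comb ip_suml //; apply: eq_bigr => g _.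
by rewrite ipZl //; case: H => S _ _; rewrite S.
Qed.

Lemma comb_norm (R : realType) (V : completeNormedModType R) (ip : V -> V -> R)
  (G : choiceType) (phi : G -> V) (s : seq G) (a : G -> R) :
  is_inner_product ip -> is_orthonormal_basis ip phi -> uniq s ->
  `|comb phi s a| ^+ 2 = \sum_(g <- s) a g ^+ 2.
Proof.
move=> H O us; case: (H) => _ _ N; rewrite -N comb_ipl //.
rewrite big_seq_cond [RHS]big_seq_cond; apply: eq_bigr => g /andP[gs _].
by rewrite comb_coef // gs expr2.
Qed.

Lemma cs_phi (R : realType) (V : completeNormedModType R) (ip : V -> V -> R)
  (G : choiceType) (phi : G -> V) z g :
  is_inner_product ip -> is_orthonormal_basis ip phi ->
  `|ip z (phi g)| <= `|z|.
Proof.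
move=> H O; case: (H) => S _ N.
set t := ip z (phi g).
have h0 : 0 <= `|z - t *: phi g| ^+ 2 by rewrite exprn_ge0.
have e1 : ip (phi g) (phi g) = 1 by rewrite (ip_phi O) eqxx.
have e2 : ip (phi g) z = t by rewrite S.
have e3 : ip (t *: phi g) (t *: phi g) = t * t.
  by rewrite ipZl // S ipZl // e1 mulr1.
have e4 : ip (t *: phi g) z = t * t by rewrite ipZl // e2.
have e5 : ip z (t *: phi g) = t * t by rewrite S e4.
rewrite -N ipBl // !ipBr // e3 e4 e5 N in h0.
have h1 : t ^+ 2 <= `|z| ^+ 2 by rewrite expr2; lra.
rewrite -ler_sqr ?nnegrE //; by rewrite real_normK ?num_real.
Qed.
Lemma sum_sub (R : realType) (G : eqType) (h : G -> R) (s t : seq G) :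
  uniq s -> uniq t -> {subset s <= t} -> (forall g, 0 <= h g) ->
  \sum_(g <- s) h g <= \sum_(g <- t) h g.
Proof.
move=> us ut st h0; rewrite [X in _ <= X](bigID (mem s)) /=.
have -> : \sum_(g <- t | g \in s) h g = \sum_(g <- s) h g.
  rewrite -big_filter; apply: perm_big; apply: uniq_perm.
  - exact: filter_uniq.
  - exact: us.
  - move=> x; rewrite mem_filter; apply/andP/idP => [[]//|xs]; split => //.
    exact: st.
by rewrite lerDl sumr_ge0.
Qed.

Lemma esum_seq_ge (R : realType) (G : choiceType) (h : G -> R) (s : seq G) :
  uniq s -> (forall g, 0 <= h g) ->
  ((\sum_(g <- s) h g)%:E <= \esum_(g in [set: G]) (h g)%:E)%E.
Proof.
move=> us h0; rewrite -sumEFin (fsbig_seq _ _ us); apply: esum_ge.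
exists [set` s] => //; split => //; exact: finite_seq.
Qed.

Lemma esum_le_seq (R : realType) (G : choiceType) (h : G -> R) (M : R) :
  (forall s : seq G, uniq s -> \sum_(g <- s) h g <= M) ->
  (\esum_(g in [set: G]) (h g)%:E <= M%:E)%E.
Proof.
move=> hM; apply: ge_ereal_sup => _ [X [finX _] <-].
by rewrite fsbig_finite // sumEFin lee_fin; apply: hM; exact: finmap.fset_uniq.
Qed.

Lemma esum_approx (R : realType) (G : choiceType) (h : G -> R) (S eta : R) :
  \esum_(g in [set: G]) (h g)%:E = S%:E -> 0 < eta ->
  exists s : seq G, uniq s /\ S - eta < \sum_(g <- s) h g.
Proof.
move=> hS e0.
have : ((S - eta)%:E < \esum_(g in [set: G]) (h g)%:E)%E.
  by rewrite hS lte_fin; lra.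
move=> /ereal_sup_gt [_ [X [finX _] <-]].
rewrite fsbig_finite // sumEFin lte_fin => lt.
by exists (finmap.enum_fset (fset_set X)); split => //; exact: finmap.fset_uniq.
Qed.
Lemma exists_inv_lt (R : realType) (e : R) : 0 < e -> exists m : nat, m.+1%:R^-1 < e.
Proof. move=> e0; have := near_infty_natSinv_lt (PosNum e0).
by move=> [M _ HM]; exists M; apply: HM => /=. Qed.

Lemma eq_from_small (R : realType) (z : R) : (forall e, 0 < e -> `|z| < e) -> z = 0.
Proof.
move=> H; apply/eqP; apply: contraT => z0.
by have := H `|z|; rewrite normr_gt0 z0 ltxx => /(_ isT).
Qed.

Lemma parseval_le (R : realType) (V : completeNormedModType R) (ip : V -> V -> R)
  (G : choiceType) (phi : G -> V) (x : V) :
  is_inner_product ip -> is_orthonormal_basis ip phi ->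
  ((`|x| ^+ 2)%:E <= \esum_(g in [set: G]) ((ip x (phi g)) ^+ 2)%:E)%E.
Proof.
move=> H O; case: (H) => S _ N; case: (O) => _ _ C.
set c := fun g => ip x (phi g).
have c0 : forall g, 0 <= c g ^+ 2 by move=> g; exact: sqr_ge0.
have E0 : (0 <= \esum_(g in [set: G]) (c g ^+ 2)%:E)%E.
  by apply: esum_ge0 => g _; rewrite lee_fin.
case hE : (\esum_(g in [set: G]) (c g ^+ 2)%:E)%E E0 => [s| |] E0 //; last first.
  by rewrite leey.
rewrite lee_fin in E0 *.
have hA : forall m : nat, exists A : seq G,
    uniq A /\ s - m.+1%:R^-1 < \sum_(g <- A) c g ^+ 2.
  by move=> m; apply: esum_approx hE _; rewrite invr_gt0 ltr0n.
have [A hA'] := choice hA.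
pose B m := undup (flatten [seq A i | i <- iota 0 m.+1]).
have uB m : uniq (B m) by exact: undup_uniq.
have AB m : {subset A m <= B m}.
  move=> g gA; rewrite mem_undup; apply/flattenP; exists (A m) => //.
  by apply: map_f; rewrite mem_iota add0n ltnSn.
have BB m n : (m <= n)%N -> {subset B m <= B n}.
  move=> mn g; rewrite !mem_undup => /flattenP [t /mapP [i ii ->] gi].
  apply/flattenP; exists (A i) => //; apply: map_f.
  by move: ii; rewrite !mem_iota /= !add0n => im; apply: leq_trans im _.
have sB m : s - m.+1%:R^-1 < \sum_(g <- B m) c g ^+ 2.
  have [uA lt] := hA' m; apply: (lt_le_trans lt).
  by apply: sum_sub; [exact: uA|exact: uB|exact: AB|exact: c0].
have sBle m : \sum_(g <- B m) c g ^+ 2 <= s.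
  by rewrite -lee_fin -hE; apply: esum_seq_ge.
pose y m := comb phi (B m) c.
have coefy m g : ip (y m) (phi g) = if g \in B m then c g else 0.
  by rewrite /y comb_coef.
have ny m : `|y m| ^+ 2 = \sum_(g <- B m) c g ^+ 2 by rewrite /y (@comb_norm _ _ ip _ phi _ _ H O).
have cauchyB m n : (m <= n)%N -> `|y n - y m| ^+ 2 <= m.+1%:R^-1.
  move=> mn.
  have e1 : ip (y m) (y n) = \sum_(g <- B m) c g ^+ 2.
    rewrite comb_ipl // big_seq [RHS]big_seq; apply: eq_bigr => g gB.
    by rewrite coefy (BB _ _ mn _ gB) expr2.
  rewrite -N ipBl // !ipBr // (S (y n) (y m)) e1 !N !ny.
  have := sB m; have := sBle n.
  move: (\sum_(g <- B n) c g ^+ 2) (\sum_(g <- B m) c g ^+ 2) => a b.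
  move: (m.+1%:R^-1) => r; lra.
have cy : cvg (y @ \oo).
  apply: cauchy_cvg; apply: cauchy_exP => e e0.
  have [m hm] := exists_inv_lt (mulr_gt0 e0 e0).
  exists (y m); exists m => // n /= mn.
  rewrite -ball_normE /= distrC.
  have h := cauchyB m n mn.
  have h2 : `|y n - y m| ^+ 2 < e ^+ 2 by rewrite expr2; apply: le_lt_trans h hm.
  by move: h2; rewrite ltr_sqr ?nnegrE // ltW.
set l := lim (y @ \oo).
have yl : y @ \oo --> l := cy.
have coefl g : ip l (phi g) = c g.
  have [m hm] : exists m, forall n, (m <= n)%N -> ip (y n) (phi g) = c g.
    case: (eqVneq (c g) 0) => cg0.
      by exists 0%N => n _; rewrite coefy cg0; case: ifP.
    have cg2 : 0 < c g ^+ 2 by rewrite lt0r sqrf_eq0 cg0 c0.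
    have [m hm] := exists_inv_lt cg2.
    have gB : g \in B m.
      apply: contraT => gBn; suff : False by [].
      have u : uniq (g :: B m) by rewrite /= gBn uB.
      have := esum_seq_ge u c0; rewrite hE lee_fin big_cons => h1.
      have := sB m; move: h1 hm.
      move: (\sum_(g <- B m) c g ^+ 2) (c g ^+ 2) (m.+1%:R^-1) => a b r; lra.
    by exists m => n mn; rewrite coefy (BB _ _ mn _ gB).
  apply/eqP; rewrite -subr_eq0; apply/eqP; apply: eq_from_small => e e0.
  move/cvgrPdist_lt : yl => /(_ e e0) [M _ HM].
  have := HM (maxn m M) (leq_maxr _ _).
  rewrite -(hm (maxn m M) (leq_maxl _ _)) -ipBl //.
  by apply: le_lt_trans; exact: (cs_phi _ _ H O).
have xl : x = l.
  apply/eqP; rewrite -subr_eq0; apply/eqP; apply: C => g.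
  by rewrite ipBl // coefl subrr.
have ny_le n : `|y n| <= Num.sqrt s.
  rewrite -[`|y n|]normr_id -sqrtr_sqr; apply: ler_wsqrtr; rewrite ny.
  exact: sBle.
have xle : `|x| <= Num.sqrt s.
  rewrite leNgt; apply/negP => lt.
  have e0 : 0 < `|x| - Num.sqrt s by rewrite subr_gt0.
  move/cvgrPdist_lt : yl => /(_ _ e0) [M _ HM].
  have := HM M (leqnn M); rewrite -xl => h1.
  have h2 : `|x| <= `|x - y M| + `|y M| by rewrite -{1}(subrK (y M) x) ler_normD.
  have := ny_le M; move: h1 h2 lt.
  move: (`|x|) (`|x - y M|) (`|y M|) (Num.sqrt s) => a b d r; lra.
rewrite lee_fin -[X in _ <= X](sqr_sqrtr E0) ler_sqr ?nnegrE ?sqrtr_ge0 //.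
Qed.
Lemma powR_cvg (R : realType) (u : nat -> R) (a p : R) :
  0 < a -> u @ \oo --> a -> (fun k => powR (u k) p) @ \oo --> powR a p.
Proof.
move=> a0 ua.
have h1 : (fun k => ln (u k)) @ \oo --> ln a := cvg_comp _ _ ua (continuous_ln a0).
have h2 : (fun k => p * ln (u k)) @ \oo --> p * ln a.
  by apply: cvgM => //; exact: cvg_cst.
have h3 : (fun k => expR (p * ln (u k))) @ \oo --> expR (p * ln a).
  exact: (cvg_comp _ _ h2 (@continuous_expR R (p * ln a))).
have -> : powR a p = expR (p * ln a) by rewrite /powR gt_eqF.
apply: cvg_trans h3; apply: near_eq_cvg.
move/cvgrPdist_lt : ua => /(_ a a0) [N _ HN]; exists N => // k /= Nk.
have := HN k Nk; have := ler_norm (a - u k) => h h'.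
have uk : 0 < u k by lra.
by rewrite /powR gt_eqF.
Qed.
Lemma sq_le_pow (R : realType) (b p : R) :
  1 <= p <= 2 -> powR `|b| p <= 1 -> b ^+ 2 <= powR `|b| p.
Proof.
move=> /andP[p1 p2] hb.
have [b1|b1] := leP `|b| 1.
  have [->|b0] := eqVneq b 0; first by rewrite expr0n /= powR_ge0.
  have bp : 0 < `|b| by rewrite normr_gt0.
  rewrite -real_normK ?num_real // -powR_mulrn //.
  by apply: ger_powR => //; rewrite bp b1.
have := le1r_powR (ltW b1) p1; lra.
Qed.

Lemma pt_bound (R : realType) (b0 bk w c p : R) :
  0 < c -> c <= w -> 1 <= p <= 2 ->
  w * powR `|bk| p < c -> w * powR `|b0| p < c ->
  (b0 - bk) ^+ 2 <= 2 / c * (w * powR `|bk| p + w * powR `|b0| p).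
Proof.
move=> c0 cw hp hk h0.
have Pk0 := powR_ge0 `|bk| p; have P00 := powR_ge0 `|b0| p.
have Pk1 : powR `|bk| p <= 1 by nra.
have P01 : powR `|b0| p <= 1 by nra.
have := sq_le_pow hp Pk1; have := sq_le_pow hp P01 => s0 sk.
move: hk h0 Pk0 P00 Pk1 P01 s0 sk.
move: (powR `|bk| p) (powR `|b0| p) => Pk P0 hk h0 Pk0 P00 Pk1 P01 s0 sk.
have e1 : (b0 - bk) ^+ 2 <= 2 * (Pk + P0).
  have : (b0 - bk) ^+ 2 <= 2 * b0 ^+ 2 + 2 * bk ^+ 2.
    have := sqr_ge0 (b0 + bk); rewrite !expr2; nra.
  lra.
apply: (le_trans e1); rewrite mulrAC ler_pdivlMr //; nra.
Qed.

Lemma sum_const_seq (R : realType) (T : Type) (s : seq T) (e : R) :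
  \sum_(g <- s) e = (size s)%:R * e.
Proof.
elim: s => [|x s IH]; first by rewrite big_nil mul0r.
by rewrite big_cons IH /= mulrSr mulrDl mul1r addrC.
Qed.

Lemma le_sum_mem (R : realType) (G : eqType) (h : G -> R) (s : seq G) g :
  g \in s -> uniq s -> (forall x, 0 <= h x) -> h g <= \sum_(x <- s) h x.
Proof.
move=> gs us h0; rewrite (bigD1_seq g) //= lerDl.
by apply: sumr_ge0.
Qed.

Lemma near_all (R : realType) (G : eqType) (P : G -> nat -> Prop) (s : seq G) :
  (forall g, g \in s -> \forall k \near \oo, P g k) ->
  exists N, forall k, (N <= k)%N -> forall g, g \in s -> P g k.
Proof.
elim: s => [|x s IH] H; first by exists 0%N => k _ g; rewrite in_nil.
have [N1 _ H1] := H x (mem_head _ _).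
have [N2 H2] : exists N, forall k, (N <= k)%N -> forall g, g \in s -> P g k.
  by apply: IH => g gs; apply: H; rewrite in_cons gs orbT.
exists (maxn N1 N2) => k k1 g; rewrite in_cons => /orP[/eqP->|gs].
  by apply: H1 => /=; apply: leq_trans k1; exact: leq_maxl.
by apply: H2 => //; apply: leq_trans k1; exact: leq_maxr.
Qed.

Lemma lsc_pow (R : realType) (u : nat -> R) (a p w e : R) :
  0 < e -> 0 <= w -> 1 <= p -> u @ \oo --> a ->
  \forall k \near \oo, w * powR `|a| p - e < w * powR `|u k| p.
Proof.
move=> e0 w0 p1 ua.
have [->|a0] := eqVneq a 0.
  exists 0%N => // k _ /=; rewrite normr0 powR0 ?mulr0; last by rewrite gt_eqF // (lt_le_trans ltr01).
  by rewrite sub0r (lt_le_trans _ (mulr_ge0 w0 (powR_ge0 _ _))) // oppr_lt0.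
have na : (fun k => `|u k|) @ \oo --> `|a| by apply: cvg_norm.
have pa : (fun k => powR `|u k| p) @ \oo --> powR `|a| p.
  by apply: powR_cvg na; rewrite normr_gt0.
have wa : (fun k => w * powR `|u k| p) @ \oo --> w * powR `|a| p.
  by apply: cvgM => //; exact: cvg_cst.
move/cvgrPdist_lt : wa => /(_ e e0) [N _ HN]; exists N => // k /= Nk.
have := HN k Nk; have := ler_norm (w * powR `|a| p - w * powR `|u k| p).
move: (w * powR `|a| p) (w * powR `|u k| p) => x y; lra.
Qed.
Unset Implicit Arguments. Set Strict Implicit.
Theorem lemma6p16 (R : realType) (V : completeNormedModType R)
    (ip : V -> V -> R) (G : choiceType) (phi : G -> V)
    (n : nat) (part : G -> 'I_n) (pexp : 'I_n -> R) (w : G -> R) (c : R)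
    (v : V) (vs : nat -> V) :
  is_inner_product ip ->
  is_orthonormal_basis ip phi ->
  (forall i, 1 <= pexp i <= 2) ->
  0 < c -> (forall g, c <= w g) ->
  weak_cvg ip vs v ->
  wnorm ip phi w (fun g => pexp (part g)) v \is a fin_num ->
  (fun k => wnorm ip phi w (fun g => pexp (part g)) (vs k)) @ \oo -->
    wnorm ip phi w (fun g => pexp (part g)) v ->
  (fun k => `|v - vs k|) @ \oo --> 0.
Proof.
move=> H O hp c0 hw hweak hfin hcvg.
have w0 g : 0 < w g := lt_le_trans c0 (hw g).
have hpg g : 1 <= pexp (part g) <= 2 := hp (part g).
have p1 g : 1 <= pexp (part g) by case/andP: (hpg g).
pose f (u : V) g := w g * powR `|ip u (phi g)| (pexp (part g)).
have fge u g : 0 <= f u g by rewrite mulr_ge0 ?powR_ge0 // ltW.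
have wnE u : wnorm ip phi w (fun g => pexp (part g)) u =
    \esum_(g in [set: G]) (f u g)%:E by [].
have [S hS] : exists S, wnorm ip phi w (fun g => pexp (part g)) v = S%:E.
  by exists (fine (wnorm ip phi w (fun g => pexp (part g)) v)); rewrite fineK.
rewrite hS in hcvg; rewrite wnE in hS.
move/fine_cvgP : hcvg => [[Nf _ HNf] hcvgS].
apply/cvgrPdist_lt => eps eps0.
pose dl := eps ^+ 2 / 2.
have dl0 : 0 < dl by rewrite divr_gt0 // exprn_gt0.
have dle : dl < eps ^+ 2 by rewrite /dl ltr_pdivrMr //; rewrite ltr_pMr ?exprn_gt0 // ltr1n.
pose eta := Num.min (Num.min 1 (c / 8)) (dl * c / (c + 8)).
have eta0 : 0 < eta.
  by rewrite !lt_min ltr01 !divr_gt0 // ?mulr_gt0 // addr_gt0.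
have eta1 : eta <= 1 by rewrite !ge_min lexx.
have etac : eta <= c / 8 by rewrite !ge_min lexx orbT.
have etad : eta * (c + 8) <= dl * c.
  have : eta <= dl * c / (c + 8) by rewrite ge_min lexx orbT.
  by rewrite ler_pdivlMr // addr_gt0.
have [F [uF hF]] := esum_approx hS eta0.
pose eta' := eta / (size F).+1%:R.
have eta'0 : 0 < eta' by rewrite divr_gt0.
have eta'e : (size F)%:R * eta' <= eta.
  by rewrite /eta' mulrA ler_pdivrMr // mulrC ler_pM2l // ler_nat leqnSn.
have eta'1 : eta' <= eta.
  have e1 : (1 : R) <= (size F).+1%:R by rewrite ler1n.
  rewrite /eta' ler_pdivrMr //.
  by rewrite -{1}(mulr1 eta) ler_pM2l.
have [N2 HN2] := @near_all R G (fun g k => f v g - eta' < f (vs k) g) F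
  (fun g _ => @lsc_pow R _ _ (pexp (part g)) (w g) eta' eta'0 (ltW (w0 g)) (p1 g) (hweak (phi g))).
have [N3 HN3] := @near_all R G (fun g k => `|ip v (phi g) - ip (vs k) (phi g)| < eta') F
  (fun g _ => (cvgrPdist_lt _ _).1 (hweak (phi g)) _ eta'0).
have [N1 _ HN1] := (cvgrPdist_lt _ _).1 hcvgS eta eta0.
exists (maxn Nf (maxn N1 (maxn N2 N3))) => // k /= hk.
move: hk; rewrite !geq_max => /and4P [hNf hN1 hN2 hN3].
have finK := HNf k hNf.
have hN1' := HN1 k hN1; have hN2' := HN2 k hN2; have hN3' := HN3 k hN3.
rewrite /= in finK hN1'.
move: hN1'.
set Sk := fine (wnorm ip phi w (fun g => pexp (part g)) (vs k)) => hN1'.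
have hSk : \esum_(g in [set: G]) (f (vs k) g)%:E = Sk%:E.
  by rewrite -wnE /Sk fineK.
have key : forall t : seq G, uniq t ->
    \sum_(g <- t) (ip (v - vs k) (phi g)) ^+ 2 <= dl.
  move=> t ut.
  under eq_bigr => g _ do rewrite ipBl //.
  rewrite (bigID (mem F)) /=.
  set d := fun g => ip v (phi g) - ip (vs k) (phi g).
  have hA1 : \sum_(g <- t | g \in F) d g ^+ 2 <= eta.
    rewrite -big_filter.
    apply: (@le_trans _ _ (\sum_(g <- F) d g ^+ 2)).
      apply: sum_sub => //; first exact: filter_uniq.
        by move=> g; rewrite mem_filter => /andP[].
      by move=> g; exact: sqr_ge0.
    apply: (@le_trans _ _ (\sum_(g <- F) eta')); last by rewrite sum_const_seq.
    rewrite big_seq_cond [X in _ <= X]big_seq_cond; apply: ler_sum => g /andP[gF _].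
    have := hN3' g gF; rewrite -/(d g) -real_normK ?num_real // => hd.
    have := normr_ge0 (d g); move: hd eta'1 eta1; nra.
  pose tF := [seq g <- t | g \notin F].
  have utF : uniq tF by exact: filter_uniq.
  have ucat : uniq (tF ++ F).
    rewrite cat_uniq utF uF andbT; apply/hasPn => g gF.
    by rewrite mem_filter gF.
  have sumk : \sum_(g <- tF) f (vs k) g + \sum_(g <- F) f (vs k) g <= Sk.
    by rewrite -big_cat -lee_fin -hSk; apply: esum_seq_ge.
  have sum0 : \sum_(g <- tF) f v g + \sum_(g <- F) f v g <= S.
    by rewrite -big_cat -lee_fin -hS; apply: esum_seq_ge.
  have lowF : \sum_(g <- F) f v g - eta <= \sum_(g <- F) f (vs k) g.
    have : \sum_(g <- F) (f v g - eta') <= \sum_(g <- F) f (vs k) g.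
      rewrite big_seq_cond [X in _ <= X]big_seq_cond; apply: ler_sum => g /andP[gF _].
      exact: ltW (hN2' g gF).
    rewrite sumrB sum_const_seq => h.
    move: h eta'e; move: (\sum_(g <- F) f v g) (\sum_(g <- F) f (vs k) g) ((size F)%:R * eta') => a b r; lra.
  have Skle : Sk < S + eta.
    have := ler_norm (Sk - S); rewrite distrC; move: hN1'; lra.
  have hTk : \sum_(g <- tF) f (vs k) g < 3 * eta.
    move: sumk lowF Skle hF.
    move: (\sum_(g <- tF) f (vs k) g) (\sum_(g <- F) f (vs k) g) (\sum_(g <- F) f v g) => a b r; lra.
  have hT0 : \sum_(g <- tF) f v g < eta.
    move: sum0 hF; move: (\sum_(g <- tF) f v g) (\sum_(g <- F) f v g) => a b; lra.
  have hA2 : \sum_(g <- t | g \notin F) d g ^+ 2 <=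
      2 / c * (\sum_(g <- tF) f (vs k) g + \sum_(g <- tF) f v g).
    rewrite -big_filter -/tF -big_split mulr_sumr /=.
    rewrite big_seq_cond [X in _ <= X]big_seq_cond; apply: ler_sum => g /andP[gt _].
    have fk : f (vs k) g < c.
      apply: (le_lt_trans (le_sum_mem gt utF (fge (vs k)))).
      apply: (lt_le_trans hTk); move: etac c0 eta0; lra.
    have f0 : f v g < c.
      apply: (le_lt_trans (le_sum_mem gt utF (fge v))).
      apply: (lt_le_trans hT0); move: etac c0 eta0; lra.
    exact: pt_bound c0 (hw g) (hpg g) fk f0.
  move: hA1 hA2 hTk hT0.
  move: (\sum_(g <- t | g \in F) d g ^+ 2) (\sum_(g <- t | g \notin F) d g ^+ 2).
  move: (\sum_(g <- tF) f (vs k) g) (\sum_(g <- tF) f v g) => Tk T0 A1 A2 hA1 hA2 hTk hT0.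
  set z := 2 / c * (Tk + T0) in hA2.
  have cz : c * z = 2 * (Tk + T0) by rewrite /z mulrA mulrCA mulfV ?gt_eqF // mulr1.
  have : c * (eta + z) <= c * dl.
    rewrite mulrDr cz; move: etad hTk hT0; lra.
  rewrite ler_pM2l // => h; lra.
have hpar := parseval_le (v - vs k) H O.
have hle := esum_le_seq key.
have := le_trans hpar hle; rewrite lee_fin => hsq.
rewrite sub0r normrN normr_id.
have : `|v - vs k| ^+ 2 < eps ^+ 2 by apply: le_lt_trans hsq dle.
by rewrite ltr_sqr ?nnegrE // ltW.
Qed.
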